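(* Let $\alpha\neq0$, $s,t\in\mathbb{C}$, $w=\tfrac12(s+t)$ with $w\notin\mathbb{Z}$, $n$ a positive integer, $c\in\mathbb{Z}$, $k\in\{-n,-n+2,\dots,n\}$, $u\in\mathbb{C}$, and $n_\pm(k)=\tfrac12(n\pm k)$. Then the following polynomial identities in $z$ hold: $$-\alpha^{-1}\Big\{[\alpha(-u+c+1+s)-z]\Delta_--\alpha u\Delta_+\Big\}\psi^{(n)}(z|0)^{c+k+1}_{c+1}=\frac{n_-(k)(c+1-n_-(k)+w-u)}{c+k+1+w}\,\psi^{(n)}(z|0)^{c+k+2}_{c}+\frac{(u+n_+(k))(c+1+n_+(k)+w)}{c+k+1+w}\,\psi^{(n)}(z|0)^{c+k}_{c},$$ $$-\alpha^{-1}\Big\{[\alpha(-u-c+1-t)-z]\Delta_--\alpha u\Delta_+\Big\}\psi^{(n)}(z|0)^{c+k-1}_{c-1}=\frac{n_+(k)(c-1+n_+(k)+w+u)}{c+k-1+w}\,\psi^{(n)}(z|0)^{c+k-2}_{c}+\frac{(u+n_-(k))(c-1-n_-(k)+w)}{c+k-1+w}\,\psi^{(n)}(z|0)^{c+k}_{c}.$$ Thus these coefficients are the weights $W^{(n,1)}\left(\begin{smallmatrix} c+k+1& c+1\\ c+k+1\pm1& c\end{smallmatrix}\middle|u\right)$ and $W^{(n,1)}\left(\begin{smallmatrix} c+k-1& c-1\\ c+k-1\mp1& c\end{smallmatrix}\middle|u\right)$ respectively.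
   Context: $[\Delta_\pm f](z)=\tfrac12(f(z+\alpha)\pm f(z-\alpha))$; $z$ acts by multiplication. For a positive integer $n$, integers $a,b$ and $u\in\mathbb{C}$, with $n_+=\tfrac12(n+b-a)$, $n_-=\tfrac12(n-b+a)$: if $n_\pm$ are nonnegative integers, $\psi^{(n)}(z|u)^a_b=(-1)^n\prod_{p=1}^{n_+}[z-\alpha(u+n-a-2p+1-t)]\prod_{q=1}^{n_-}[z-\alpha(u+n+a-2q+1+s)]$; otherwise $\psi^{(n)}(z|u)^a_b=0$. *)

(* Defs.v *)
From HB Require Import structures.
From mathcomp Require Import all_boot all_order all_algebra.
From mathcomp Require Import Rstruct.
From mathcomp.real_closed Require Import complex.
Set Implicit Arguments. Unset Strict Implicit. Unset Printing Implicit Defensive.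
Import Order.TTheory GRing.Theory Num.Theory.
Local Open Scope ring_scope.

Definition C : Type := complex Rdefinitions.R.
HB.instance Definition _ := Num.ClosedField.on C.

Definition Dplus (alpha : C) (f : C -> C) (z : C) : C :=
  (f (z + alpha) + f (z - alpha)) / 2.
Definition Dminus (alpha : C) (f : C -> C) (z : C) : C :=
  (f (z + alpha) - f (z - alpha)) / 2.

(* psi^{(n)}(z|u)^a_b, as a function of z, with parameters alpha, s, t.
   n_+ = (n+b-a)/2, n_- = (n-b+a)/2 = n - n_+; nonzero branch iff both are
   nonnegative integers, i.e. d := n+b-a is even with 0 <= d <= 2n. *)
Definition psi (alpha s t : C) (n : nat) (u : C) (a b : int) (z : C) : C :=
  let d : int := (n%:Z + b - a)%R in
  if (0 <= d) && (d <= (2 * n)%N%:Z) && ~~ odd `|d|%N then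
    let np := (`|d| %/ 2)%N in
    let nm := (n - np)%N in
    (-1) ^+ n
    * (\prod_(1 <= p < np.+1)
         (z - alpha * (u + n%:R - a%:~R - 2 * p%:R + 1 - t)))
    * (\prod_(1 <= q < nm.+1)
         (z - alpha * (u + n%:R + a%:~R - 2 * q%:R + 1 + s)))
  else 0.

(* Main.v *)
Require Import Defs.
From HB Require Import structures.
From mathcomp Require Import all_boot all_order all_algebra.
From mathcomp Require Import Rstruct.
From mathcomp.real_closed Require Import complex.
From mathcomp Require Import ring lra zify.
Import Order.TTheory GRing.Theory Num.Theory.
Local Open Scope ring_scope.

Definition Pr (alpha : C) (m : nat) (e z : C) : C :=
  \prod_(1 <= p < m.+1) (z - alpha * (e - 2 * p%:R)).

Lemma Pr0 alpha e z : Pr alpha 0 e z = 1.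
Proof. by rewrite /Pr big_nil. Qed.

Lemma Pr_sp alpha m e e' z : e' = e - 1 -> Pr alpha m e (z + alpha) = Pr alpha m e' z.
Proof. move=> ->; rewrite /Pr; apply: eq_bigr => i _; ring. Qed.

Lemma Pr_sm alpha m e e' z : e' = e + 1 -> Pr alpha m e (z - alpha) = Pr alpha m e' z.
Proof. move=> ->; rewrite /Pr; apply: eq_bigr => i _; ring. Qed.

Lemma Pr_first alpha m e e' z : e' = e - 2 ->
  Pr alpha m.+1 e z = (z - alpha * (e - 2)) * Pr alpha m e' z.
Proof.
move=> ->; rewrite /Pr big_nat_recl //=.
congr (_ * _); first ring. idtac.
apply: eq_bigr => i _; rewrite -addn1 natrD; ring.
Qed.

Lemma Pr_last alpha m e e' z : e' = e ->
  Pr alpha m.+1 e z = Pr alpha m e' z * (z - alpha * (e - 2 * m.+1%:R)).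
Proof. by move=> ->; rewrite /Pr big_nat_recr. Qed.

Lemma psi_eq alpha s t n a b np eA eB z :
  (n%:Z + b - a = (2 * np)%N%:Z) -> (np <= n)%N ->
  eA = n%:R - a%:~R + 1 - t -> eB = n%:R + a%:~R + 1 + s ->
  psi alpha s t n 0 a b z = (-1) ^+ n * Pr alpha np eA z * Pr alpha (n - np) eB z.
Proof.
move=> hd hnp -> ->; rewrite /psi hd.
have -> : (0 <= (2 * np)%N%:Z) = true by [].
have -> : ((2 * np)%N%:Z <= (2 * n)%N%:Z) = true by rewrite lez_nat leq_mul2l hnp orbT.
rewrite absz_nat mul2n odd_double /= -mul2n mulKn //.
congr (_ * _ * _); apply: eq_bigr => i _; ring.
Qed.

Lemma psi_neg alpha s t n a b u z : n%:Z + b - a < 0 -> psi alpha s t n u a b z = 0.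
Proof. by move=> h; rewrite /psi leNgt h. Qed.

Lemma psi_big alpha s t n a b u z : (2 * n)%N%:Z < n%:Z + b - a -> psi alpha s t n u a b z = 0.
Proof. by move=> h; rewrite /psi [_ <= (2 * n)%N%:Z]leNgt h andbF. Qed.

Lemma psi_eq2 alpha s t n a b np z :
  (n%:Z + b - a = (2 * np)%N%:Z) -> (np <= n)%N ->
  psi alpha s t n 0 a b z = (-1) ^+ n * Pr alpha np (n%:R - a%:~R + 1 - t) z
     * Pr alpha (n - np) (n%:R + a%:~R + 1 + s) z.
Proof. by move=> h1 h2; apply: psi_eq. Qed.

Lemma two_neq0 : (2 : C) != 0.
Proof. by rewrite pnatr_eq0. Qed.

Lemma den_ok (x w d : C) : d = (x + w / 2) * 2 -> x + w / 2 != 0 -> d != 0.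
Proof. by move=> -> H; rewrite mulf_neq0 // two_neq0. Qed.

Ltac fin hden ha :=
  move: ((-1) ^+ _) => sg; field; rewrite ?ha ?andbT ?andTb;
  apply: (den_ok _ _ _ _ hden); by field.

Theorem mainTheorem10 (alpha s t : C) (n : nat) (c k : int) (u : C) :
  alpha != 0 ->
  (forall m : int, (s + t) / 2 != m%:~R) ->
  (0 < n)%N ->
  - (n%:Z) <= k -> k <= n%:Z -> ~~ odd `|(n%:Z + k)%R|%N ->
  let w := (s + t) / 2 in
  let npl := (n%:R + k%:~R) / 2 : C in
  let nmi := (n%:R - k%:~R) / 2 : C in
  forall z : C,
    - alpha^-1 *
      ((alpha * (- u + c%:~R + 1 + s) - z)
         * Dminus alpha (psi alpha s t n 0 (c + k + 1) (c + 1)) z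
       - alpha * u * Dplus alpha (psi alpha s t n 0 (c + k + 1) (c + 1)) z)
    = nmi * (c%:~R + 1 - nmi + w - u) / ((c + k)%:~R + 1 + w)
        * psi alpha s t n 0 (c + k + 2) c z
      + (u + npl) * (c%:~R + 1 + npl + w) / ((c + k)%:~R + 1 + w)
        * psi alpha s t n 0 (c + k) c z
  /\
    - alpha^-1 *
      ((alpha * (- u - c%:~R + 1 - t) - z)
         * Dminus alpha (psi alpha s t n 0 (c + k - 1) (c - 1)) z
       - alpha * u * Dplus alpha (psi alpha s t n 0 (c + k - 1) (c - 1)) z)
    = npl * (c%:~R - 1 + npl + w + u) / ((c + k)%:~R - 1 + w)
        * psi alpha s t n 0 (c + k - 2) c z
      + (u + nmi) * (c%:~R - 1 - nmi + w) / ((c + k)%:~R - 1 + w)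
        * psi alpha s t n 0 (c + k) c z.
Proof.
move=> ha hw hn hk1 hk2 hodd w npl nmi z.
have [Q [hQ hQn]] : exists Q, n%:Z + k = (2 * Q)%N%:Z /\ (Q <= n)%N.
  set m := absz (n%:Z + k).
  have hm : n%:Z + k = m%:Z by rewrite /m gez0_abs //; lia.
  have h2 := odd_double_half m; rewrite (negbTE hodd) add0n -mul2n in h2.
  exists m./2; split; first by rewrite hm h2.
  lia.
have [P hP] : exists P, n = (P + Q)%N by exists (n - Q)%N; rewrite subnK.
subst n.
have hk : k = Q%:Z - P%:Z by lia.
subst k.
rewrite /w /npl /nmi /Dminus /Dplus; clear w npl nmi.
have hden1 : (c + (Q%:Z - P%:Z))%:~R + 1 + (s + t) / 2 != 0 :> C.
  have := hw (- (c + (Q%:Z - P%:Z) + 1)); apply: contra => /eqP h.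
  apply/eqP; rewrite ?intrN ?intrD; apply/eqP; rewrite -subr_eq0; apply/eqP.
  rewrite -h; ring.
have hden2 : (c + (Q%:Z - P%:Z))%:~R - 1 + (s + t) / 2 != 0 :> C.
  have := hw (- (c + (Q%:Z - P%:Z)) + 1); apply: contra => /eqP h.
  apply/eqP; rewrite ?intrN ?intrD; apply/eqP; rewrite -subr_eq0; apply/eqP.
  rewrite -h; ring.
split.
- rewrite !(@psi_eq2 alpha s t (P+Q) (c + (Q%:Z - P%:Z) + 1) (c+1) P); try lia.
  rewrite !(@psi_eq2 alpha s t (P+Q) (c + (Q%:Z - P%:Z)) c P); try lia.
  rewrite addKn.
  rewrite !(Pr_sp _ _ _ _ _ erefl) !(Pr_sm _ _ _ _ _ erefl).
  case: P hn hQn hk1 hk2 hodd hQ hden1 hden2 => [|P'] hn hQn hk1 hk2 hodd hQ hden1 hden2;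
  case: Q hn hQn hk1 hk2 hodd hQ hden1 hden2 => [|Q'] hn hQn hk1 hk2 hodd hQ hden1 hden2.
  + by [].
  + rewrite (@psi_neg alpha s t (0+Q'.+1) (c + (Q'.+1%:Z - 0%:Z) + 2) c); last by lia.
    rewrite !Pr0.
    rewrite ![Pr _ _.+1 (_ + 1) _](Pr_first _ _ _ _ _ erefl).
    rewrite !(Pr_last _ _ _ _ _ erefl).
    have [XB HB] : exists XB, forall e : C, e = 2 * Q'%:R + 3 + c%:~R + s -> Pr alpha Q' e z = XB.
      by eexists => e ->.
    rewrite !HB; [ | ring ..].
    fin hden1 ha.
  + rewrite (@psi_eq2 alpha s t (P'.+1+0) (c + (0%:Z - P'.+1%:Z) + 2) c P'); try lia.
    have -> : (P'.+1 + 0 - P')%N = 1%N by lia.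
    rewrite ![Pr _ _.+1 (_ + 1) _](Pr_first _ _ _ _ _ erefl).
    rewrite [Pr _ 1 _ _](Pr_first _ _ _ _ _ erefl).
    rewrite [Pr _ _.+1 (_ - t) _](Pr_first _ _ _ _ _ erefl).
    rewrite !(Pr_last _ _ _ _ _ erefl) !Pr0.
    have [XA HA] : exists XA, forall e : C, e = 2 * P'%:R + 1 - c%:~R - t -> Pr alpha P' e z = XA.
      by eexists => e ->.
    rewrite !HA; [ | ring ..].
    fin hden1 ha.
  + rewrite (@psi_eq2 alpha s t (P'.+1+Q'.+1) (c + (Q'.+1%:Z - P'.+1%:Z) + 2) c P'); try lia.
    have -> : (P'.+1 + Q'.+1 - P')%N = Q'.+2 by lia.
    rewrite ![Pr _ _.+1 (_ + 1) _](Pr_first _ _ _ _ _ erefl).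
    rewrite [Pr _ Q'.+2 _ _](Pr_first _ _ _ _ _ erefl).
    rewrite [Pr _ _.+1 (_ - t) _](Pr_first _ _ _ _ _ erefl).
    rewrite !(Pr_last _ _ _ _ _ erefl).
    have [XA HA] : exists XA, forall e : C, e = 2 * P'%:R + 1 - c%:~R - t -> Pr alpha P' e z = XA.
      by eexists => e ->.
    have [XB HB] : exists XB, forall e : C, e = 2 * Q'%:R + 3 + c%:~R + s -> Pr alpha Q' e z = XB.
      by eexists => e ->.
    rewrite !HA; [ | ring ..]. rewrite !HB; [ | ring ..].
    fin hden1 ha.
- rewrite !(@psi_eq2 alpha s t (P+Q) (c + (Q%:Z - P%:Z) - 1) (c-1) P); try lia.
  rewrite !(@psi_eq2 alpha s t (P+Q) (c + (Q%:Z - P%:Z)) c P); try lia.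
  rewrite addKn.
  rewrite !(Pr_sp _ _ _ _ _ erefl) !(Pr_sm _ _ _ _ _ erefl).
  case: P hn hQn hk1 hk2 hodd hQ hden1 hden2 => [|P'] hn hQn hk1 hk2 hodd hQ hden1 hden2;
  case: Q hn hQn hk1 hk2 hodd hQ hden1 hden2 => [|Q'] hn hQn hk1 hk2 hodd hQ hden1 hden2.
  + by [].
  + rewrite (@psi_eq2 alpha s t (0+Q'.+1) (c + (Q'.+1%:Z - 0%:Z) - 2) c 1); try lia.
    have -> : (0 + Q'.+1 - 1)%N = Q' by lia.
    rewrite ![Pr _ _.+1 (_ + 1) _](Pr_first _ _ _ _ _ erefl).
    rewrite [Pr _ 1 (_ - t) _](Pr_first _ _ _ _ _ erefl).
    rewrite [Pr _ _.+1 (_ + s) _](Pr_first _ _ _ _ _ erefl).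
    rewrite !(Pr_last _ _ _ _ _ erefl) !Pr0.
    have [XB HB] : exists XB, forall e : C, e = 2 * Q'%:R + 1 + c%:~R + s -> Pr alpha Q' e z = XB.
      by eexists => e ->.
    rewrite !HB; [ | ring ..].
    fin hden2 ha.
  + rewrite (@psi_big alpha s t (P'.+1+0) (c + (0%:Z - P'.+1%:Z) - 2) c); last by lia.
    rewrite !Pr0.
    rewrite ![Pr _ _.+1 (_ + 1) _](Pr_first _ _ _ _ _ erefl).
    rewrite !(Pr_last _ _ _ _ _ erefl).
    have [XA HA] : exists XA, forall e : C, e = 2 * P'%:R + 3 - c%:~R - t -> Pr alpha P' e z = XA.
      by eexists => e ->.
    rewrite !HA; [ | ring ..].
    fin hden2 ha.
  + rewrite (@psi_eq2 alpha s t (P'.+1+Q'.+1) (c + (Q'.+1%:Z - P'.+1%:Z) - 2) c P'.+2); try lia.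
    have -> : (P'.+1 + Q'.+1 - P'.+2)%N = Q' by lia.
    rewrite ![Pr _ _.+1 (_ + 1) _](Pr_first _ _ _ _ _ erefl).
    rewrite [Pr _ P'.+2 _ _](Pr_first _ _ _ _ _ erefl).
    rewrite [Pr _ _.+1 (_ + s) _](Pr_first _ _ _ _ _ erefl).
    rewrite !(Pr_last _ _ _ _ _ erefl).
    have [XA HA] : exists XA, forall e : C, e = 2 * P'%:R + 3 - c%:~R - t -> Pr alpha P' e z = XA.
      by eexists => e ->.
    have [XB HB] : exists XB, forall e : C, e = 2 * Q'%:R + 1 + c%:~R + s -> Pr alpha Q' e z = XB.
      by eexists => e ->.
    rewrite !HA; [ | ring ..]. rewrite !HB; [ | ring ..].
    fin hden2 ha.
Qed.
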